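(* For every real $M\ge0$ and positive integers $N,K$, with $\mathcal{N}=\{1,\dots,N\}$, \[ \max_{s\in\{1,\dots,\lceil\min\{N,K\}/4\rceil\}}\bar{R}_s(M,\mathcal{N},s)\ge\frac{1}{48}R(M,N,K). \]
   Context: Caching problem: a server holds $N$ files of $F$ bits each, connected through a shared error-free link to users each with a cache of $MF$ bits. In the placement phase each user stores an arbitrary function of the files of at most $MF$ bits; in the delivery phase the demand vector is revealed, the server sends a message over the shared link, and each user must reconstruct its requested file from the message and its cache. The rate is message length divided by $F$. For $s\le N$, $\bar{R}_s(M,\mathcal{N},s)$ is the optimal expected rate (infimum over all placement and delivery schemes of the expected rate, achievable with vanishing error probability for all large $F$) for a system with $s$ users whose demand vector is uniformly distributed over vectors in $\mathcal{N}^s$ with $s$ distinct entries (i.e., files chosen uniformly at random without replacement). The function $R$ is defined by $R(M,N,K)=(1-M/N)\min\{\tfrac{N}{M}(1-(1-M/N)^K),N\}$ for $M\in(0,N]$, $R(0,N,K)=\min\{N,K\}$, and $R(M,N,K)=0$ for $M>N$. *)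

(* Defs.v *)
From HB Require Import structures.
From mathcomp Require Import all_boot all_order all_algebra.
From mathcomp Require Import boolp classical_sets reals.

Set Implicit Arguments.
Unset Strict Implicit.
Unset Printing Implicit Defensive.

Import Order.TTheory GRing.Theory Num.Theory.
Local Open Scope ring_scope.

Definition files (N F : nat) := {ffun 'I_N -> F.-tuple bool}.

Definition demand (N s : nat) := {ffun 'I_s -> 'I_N}.

(* The support of the demand distribution: demand vectors with s distinct
   entries (files chosen without replacement); the distribution is uniform. *)
Definition distinct_demands (N s : nat) : {set demand N s} :=
  [set d : demand N s | injectiveb d].

(* A caching scheme for N files of F bits, s users with caches of C bits.
   - placement: user k stores an arbitrary function of the files (C bits);
   - delivery: for each demand d the server sends an arbitrary function of
     the files, of length [len d] bits;
   - decoding: user k, knowing d, decodes from the message and its cache. *)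
Record scheme (N s F C : nat) := Scheme {
  cache : 'I_s -> files N F -> C.-tuple bool;
  len : demand N s -> nat;
  msg : forall d : demand N s, files N F -> (len d).-tuple bool;
  dec : forall d : demand N s, 'I_s -> (len d).-tuple bool ->
          C.-tuple bool -> F.-tuple bool
}.
Arguments msg {N s F C} _ _ _.
Arguments dec {N s F C} _ _ _ _ _.
Arguments cache {N s F C} _ _ _.
Arguments len {N s F C} _ _.

Section SchemeDefs.
Variables (R : realType) (N s F C : nat) (sch : scheme N s F C).

Definition decoding_error (d : demand N s) (W : files N F) : bool :=
  [exists k : 'I_s,
     dec sch d k (msg sch d W) (cache sch k W) != W (d k)].

(* Error probability for demand d, files i.i.d. uniform over {0,1}^F. *)
Definition error_prob (d : demand N s) : R :=
  (#|[set W : files N F | decoding_error d W]|)%:R / (#|{: files N F}|)%:R.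

Definition expected_rate : R :=
  (\sum_(d in distinct_demands N s) ((len sch d)%:R / F%:R))
    / (#|distinct_demands N s|)%:R.

End SchemeDefs.

Definition achievable_rate (R : realType) (M : R) (N s : nat) (r : R) : Prop :=
  forall eps : R, 0 < eps ->
  exists F0 : nat, forall F : nat, (F0 <= F)%N ->
    exists C : nat, (C%:R <= M * F%:R) /\
    exists sch : scheme N s F C,
      (forall d, d \in distinct_demands N s -> error_prob R sch d <= eps) /\
      expected_rate R sch <= r.

Definition Rbar (R : realType) (M : R) (N s : nat) : R :=
  inf [set r : R | achievable_rate M N s r].

Definition Rfun (R : realType) (M : R) (N K : nat) : R :=
  if M == 0 then (minn N K)%:R
  else if (0 < M) && (M <= N%:R) then
    (1 - M / N%:R) *
      Num.min ((N%:R / M) * (1 - (1 - M / N%:R) ^+ K)) (N%:R)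
  else 0.

(* Main.v *)
Require Import Defs.
From HB Require Import structures.
From mathcomp Require Import all_boot all_order all_algebra all_fingroup.
From mathcomp Require Import boolp classical_sets reals.
From mathcomp Require Import zify ring lra.
Import Order.TTheory GRing.Theory Num.Theory.

Section Ext.
Variables (T : finType) (s : nat).

Definition xs (f : 'I_s -> T) :=
  [seq f k | k <- enum 'I_s] ++ [seq x <- enum T | x \notin [seq f k | k <- enum 'I_s]].

Lemma xs_uniq f : injective f -> uniq (xs f).
Proof.
move=> hf; rewrite cat_uniq map_inj_uniq ?enum_uniq //= filter_uniq ?enum_uniq // andbT.
by apply/hasPn => x; rewrite mem_filter => /andP [].
Qed.

Arguments xs_uniq {f}.
Lemma xs_mem f x : x \in xs f.
Proof. by rewrite mem_cat mem_filter mem_enum andbT; case: (x \in _). Qed.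

Lemma xs_size f : injective f -> size (xs f) = #|T|.
Proof.
move=> hf; rewrite -(card_uniqP (xs_uniq hf)).
by apply: eq_card => x; rewrite xs_mem.
Qed.

Arguments xs_size {f}.
Lemma perm_ext (e d : 'I_s -> T) : injective e -> injective d ->
  exists t : {perm T}, forall k, t (e k) = d k.
Proof.
move=> he hd.
pose g x := nth x (xs d) (index x (xs e)).
have hg : injective g.
  move=> x y; rewrite /g => hxy.
  have hx : index x (xs e) < size (xs d) by rewrite xs_size // -(xs_size he) index_mem xs_mem.
  have hy : index y (xs e) < size (xs d) by rewrite xs_size // -(xs_size he) index_mem xs_mem.
  rewrite (set_nth_default y x hx) in hxy.
  move: hxy => /eqP; rewrite (nth_uniq y hx hy (xs_uniq hd)) => /eqP hi.
  by rewrite -(nth_index x (xs_mem e x)) hi nth_index // xs_mem.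
exists (perm hg) => k; rewrite permE /g.
have hk : index (e k) (xs e) = k.
  rewrite /xs index_cat map_f ?mem_enum //.
  by rewrite index_map // index_enum_ord.
rewrite hk /xs nth_cat size_map size_enum_ord ltn_ord.
by rewrite (nth_map k) ?size_enum_ord // nth_ord_enum.
Qed.
End Ext.

Definition pcompd N s (t : {perm 'I_N}) (d : demand N s) : demand N s := [ffun k => t (d k)].

Arguments pcompd {N s}.
Lemma avg N s (g : demand N s -> nat) (e : demand N s) : injective e ->
  (\sum_(d in distinct_demands N s) g d) * #|{perm 'I_N}|
  = #|distinct_demands N s| * \sum_(t : {perm 'I_N}) g (pcompd t e).
Proof.
move=> he.
rewrite mulnC -[in LHS]sum_nat_const.
have h1 : forall t : {perm 'I_N}, \sum_(d in distinct_demands N s) g d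
   = \sum_(d in distinct_demands N s) g (pcompd t d).
  move=> t.
  have hi : injective (@pcompd N s t).
    move=> d1 d2 h; apply/ffunP => k.
    by move/ffunP: h => /(_ k); rewrite !ffunE => /perm_inj.
  rewrite (reindex_inj hi) /=; apply: eq_bigl => d.
  rewrite !inE; apply/injectiveP/injectiveP => hd.
    by move=> x y hxy; apply: hd; rewrite !ffunE hxy.
  by move=> x y hxy; apply: hd; move: hxy; rewrite !ffunE => /perm_inj.
under eq_bigr => t _ do rewrite (h1 t).
rewrite exchange_big /=.
rewrite -sum_nat_const; apply: eq_bigr => d.
rewrite inE => /injectiveP hd.
have [tau htau] := @perm_ext _ _ d e hd he.
rewrite (reindex_inj (mulgI tau)) /=.
apply: eq_bigr => t _; congr g; apply/ffunP => k.
by rewrite !ffunE permM htau.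
Qed.

Local Open Scope ring_scope.

Lemma card_files N F : #|{: files N F}| = (2 ^ (F * N))%N.
Proof. by rewrite card_ffun card_tuple card_bool card_ord expnM. Qed.

Section Cut.
Variables (R : realType) (N s F C : nat) (sch : scheme N s F C).
Variables (b : nat) (ds : 'I_b -> demand N s).
Hypothesis hb : (0 < b)%N.
Hypothesis hdis : forall j j' k k', ds j k = ds j' k' -> j = j' /\ k = k'.
Hypothesis herr : forall j, error_prob R sch (ds j) <= 1 / (2 * b)%:R.

Let U := [set ds p.1 p.2 | p : 'I_b * 'I_s].
Let G := [set W : files N F | [forall j, ~~ decoding_error sch (ds j) W]].

Lemma cardU : #|U| = (b * s)%N.
Proof.
rewrite card_imset ?card_prod ?card_ord //.
by move=> [j k] [j' k'] /= /hdis [-> ->].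
Qed.

Lemma cardnG : (2 * #|~: G| <= #|{: files N F}|)%N.
Proof.
have h1 : (#|~: G| <= \sum_j #|[set W | decoding_error sch (ds j) W]|)%N.
  rewrite -sum1_card.
  apply: (@leq_trans (\sum_(W in ~: G) \sum_j (W \in [set W | decoding_error sch (ds j) W]) : nat)).
    apply: leq_sum => W; rewrite !inE negb_forall => /existsP [j].
    rewrite negbK => hj.
    rewrite (bigD1 j) //= inE hj; lia.
  rewrite exchange_big /=; apply: leq_sum => j _.
  rewrite -sum1_card [X in (_ <= X)%N](bigID (fun W => W \in ~: G)) /=.
  rewrite [X in (_ <= X + _)%N]big_mkcond /= [X in (X <= _)%N]big_mkcond /=.
  apply: leq_trans (leq_addr _ _); apply: leq_sum => W _.
  by case: (W \in ~: G); case: (W \in [set W0 | decoding_error sch (ds j) W0]).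
have h2 : forall j, (2 * b * #|[set W | decoding_error sch (ds j) W]| <= #|{: files N F}|)%N.
  move=> j; have := herr j; rewrite /error_prob.
  have hT : (0 < #|{: files N F}|)%N by rewrite card_files expn_gt0.
  have hT' : (0 : R) < (#|{: files N F}|)%:R by rewrite ltr0n.
  have hb' : (0 : R) < (2 * b)%:R by rewrite ltr0n; lia.
  rewrite ler_pdivrMr // mul1r => h.
  rewrite -(ler_nat R) natrM; rewrite mulrC -ler_pdivlMr //.
  by rewrite mulrC.
suff : (2 * b * #|~: G| <= b * #|{: files N F}|)%N.
  by rewrite -mulnA mulnCA leq_mul2l; case: b hb.
apply: (@leq_trans (2 * b * \sum_j #|[set W | decoding_error sch (ds j) W]|)%N).
  by rewrite leq_mul2l h1 orbT.
rewrite big_distrr /=.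
apply: (@leq_trans (\sum_(j < b) #|{: files N F}|)%N).
  by apply: leq_sum => j _; apply: h2.
by rewrite sum_nat_const card_ord.
Qed.

Let Th (W : files N F) :=
  ([ffun k => cache sch k W],
   ([ffun j => msg sch (ds j) W] : {dffun forall j : 'I_b, (len sch (ds j)).-tuple bool}),
   [ffun x : {x : 'I_N | x \notin U} => W (val x)]).

Lemma Th_inj : {in G &, injective Th}.
Proof.
move=> W W'; rewrite !inE => /forallP hW /forallP hW' [h1 h2 h3].
apply/ffunP => x.
case: (boolP (x \in U)) => hx.
  case/imsetP: hx => [[j k]] _ /= ->.
  have := hW j; have := hW' j; rewrite /decoding_error !negb_exists.
  move=> /forallP /(_ k); rewrite negbK => /eqP <-.
  move=> /forallP /(_ k); rewrite negbK => /eqP <-.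
  have -> : msg sch (ds j) W = msg sch (ds j) W'.
    by move/ffunP: h2 => /(_ j); rewrite !ffunE.
  have -> : cache sch k W = cache sch k W'.
    by move/ffunP: h1 => /(_ k); rewrite !ffunE.
  by [].
by move/ffunP: h3 => /(_ (exist _ x hx)); rewrite !ffunE.
Qed.

Lemma cutset : (s * b * F <= \sum_j len sch (ds j) + s * C + 1)%N.
Proof.
have h := @leq_card_in _ _ Th (mem G) Th_inj.
rewrite !card_prod card_ffun card_tuple card_bool card_ord card_dep_ffun in h.
rewrite card_ffun card_tuple card_bool card_sig in h.
have hc : #|[pred x | x \notin U]| = (N - b * s)%N.
  have := cardsC U; rewrite cardU card_ord => hh.
  have -> : #|[pred x | x \notin U]| = #|~: U| by apply: eq_card => x; rewrite !inE.
  lia.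
rewrite hc in h.
have hp : foldr muln 1 [seq #|{: (len sch (ds x)).-tuple bool}| | x : 'I_b]
   = (2 ^ (\sum_j len sch (ds j)))%N.
  rewrite foldrE big_map expn_sum /=.
  by rewrite big_enum /=; apply: eq_bigr => j _; rewrite card_tuple card_bool.
rewrite hp in h.
have hG := cardsC G.
have h2 := cardnG.
rewrite card_files in hG h2.
have hbs : (b * s <= N)%N.
  have := max_card (mem U); rewrite cardU card_ord; apply.
have : (2 ^ (F * N) <= 2 ^ (s * C + \sum_j len sch (ds j) + 1 + F * (N - b * s)))%N.
  rewrite !expnD expn1 !expnM.
  move: h; rewrite -!expnM (mulnC s C) mulnAC => h.
  apply: (@leq_trans (2 * #|G|)%N); first lia.
  move: h; set A := (2 ^ (C * s))%N; set B := (2 ^ (\sum_j _))%N; set D := (2 ^ (F * _))%N.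
  move=> h; apply: (leq_trans (leq_mul (leqnn 2) h)).
  rewrite leq_eqVlt; apply/orP; left; apply/eqP; ring.
rewrite leq_exp2l // mulnBr.
have : (F * (b * s) <= F * N)%N by rewrite leq_mul2l hbs orbT.
lia.
Qed.

End Cut.

Definition blk (n s b : nat) (j : 'I_b) : demand n.+1 s :=
  [ffun k : 'I_s => inord (j * s + k)].

Lemma blk_dis n s b (hbs : (b * s <= n.+1)%N) j j' k k' :
  blk n s b j k = blk n s b j' k' -> j = j' /\ k = k'.
Proof.
rewrite /blk !ffunE => /(congr1 (@nat_of_ord _)).
have hj : (j * s + k < n.+1)%N.
  apply: leq_trans hbs; have := ltn_ord j; have := ltn_ord k; nia.
have hj' : (j' * s + k' < n.+1)%N.
  apply: leq_trans hbs; have := ltn_ord j'; have := ltn_ord k'; nia.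
rewrite !inordK // => h.
have hk : (k : nat) = k'.
  have := congr1 (modn^~ s) h; rewrite !modnMDl !modn_small //.
have hjj : (j : nat) = j'.
  move: h; rewrite hk => /addIn /eqP; rewrite eqn_mul2r => /orP [/eqP hs|/eqP //].
  by have := ltn_ord k; lia.
by split; apply: val_inj.
Qed.

Arguments blk_dis {n s b}.
Lemma scheme_bound (R : realType) n s F C (sch : scheme n.+1 s F C) b :
  (0 < b)%N -> (b * s <= n.+1)%N ->
  (forall d, d \in distinct_demands n.+1 s -> error_prob R sch d <= 1 / (2 * b)%:R) ->
  (#|distinct_demands n.+1 s| * (s * b * F) <=
     b * \sum_(d in distinct_demands n.+1 s) len sch d
     + #|distinct_demands n.+1 s| * (s * C + 1))%N.
Proof.
move=> hb hbs herr.
set D := distinct_demands n.+1 s.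
set P := #|{perm 'I_n.+1}|.
have hP : (0 < P)%N by apply/card_gt0P; exists 1%g.
have hinj : forall j, injective (blk n s b j).
  by move=> j k k' /(blk_dis hbs) [].
have hcut : forall t : {perm 'I_n.+1},
    (s * b * F <= \sum_j len sch (pcompd t (blk n s b j)) + s * C + 1)%N.
  move=> t; apply: (@cutset R _ _ _ _ sch b (fun j => pcompd t (blk n s b j)) hb).
    move=> j j' k k'; rewrite /pcompd !ffunE => /perm_inj h; apply: (blk_dis hbs); by rewrite /blk !ffunE.
  move=> j; apply: herr; rewrite inE; apply/injectiveP => k k'.
  rewrite /pcompd !ffunE => /perm_inj h; apply: (hinj j); by rewrite /blk !ffunE.
have hsum : (P * (s * b * F) <= \sum_j \sum_(t : {perm 'I_n.+1}) len sch (pcompd t (blk n s b j)) + P * (s * C + 1))%N.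
  rewrite exchange_big /= -[X in (X <= _)%N]sum_nat_const -[X in (_ <= _ + X)%N]sum_nat_const.
  rewrite -big_split /=; apply: leq_sum => t _; rewrite addnA; exact: hcut t.
have havg : forall j, (#|D| * \sum_(t : {perm 'I_n.+1}) len sch (pcompd t (blk n s b j))
     = (\sum_(d in D) len sch d) * P)%N.
  move=> j; rewrite (@avg _ _ (len sch) _ (hinj j)) /D; exact: erefl.
have h := leq_mul (leqnn #|D|) hsum.
rewrite mulnDr big_distrr /= in h.
rewrite (eq_bigr _ (fun j _ => havg j)) sum_nat_const card_ord in h.
set X := (\sum_(d in D) len sch d)%N in h *.
suff h' : (#|D| * (s*b*F) * P <= (b * X + #|D| * (s*C+1)) * P)%N by rewrite leq_pmul2r in h'.
have -> : (#|D| * (s*b*F) * P = #|D| * (P * (s*b*F)))%N by ring.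
have -> : ((b*X + #|D| * (s*C+1))*P = b*(X*P) + #|D|*(P*(s*C+1)))%N by ring.
exact: h.
Qed.

Section Triv.
Variables (N s F : nat).

Definition tmsgbit (d : demand N s) (W : files N F) (i : nat) : bool :=
  match [pick k : 'I_s | val k == (i %/ F)%N] with
  | Some k => nth false (W (d k)) (i %% F)
  | None => false
  end.

Definition triv : scheme N s F 0 :=
  @Scheme N s F 0 (fun _ _ => [tuple]) (fun _ => (s * F)%N)
    (fun d W => [tuple tmsgbit d W i | i < (s * F)%N])
    (fun d k m c => [tuple nth false m (k * F + j) | j < F]).

Lemma triv_ok d k W : dec triv d k (msg triv d W) (cache triv k W) = W (d k).
Proof.
apply: eq_from_tnth => j; rewrite /= tnth_mktuple.
have hj : (k * F + j < s * F)%N.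
  have := ltn_ord k; have := ltn_ord j; nia.
rewrite (nth_map (Ordinal hj)) ?size_enum_ord //.
have -> : nth (Ordinal hj) (enum 'I_(s * F)) (k * F + j) = Ordinal hj.
  by apply: val_inj; rewrite /= nth_enum_ord.
rewrite /tmsgbit /=.
have hF : (0 < F)%N by have := ltn_ord j; lia.
have hdiv : ((k * F + j) %/ F)%N = k.
  by rewrite divnMDl // divn_small // addn0.
have hmod : ((k * F + j) %% F)%N = j by rewrite modnMDl modn_small.
case: pickP => [k' /eqP hk'|/(_ k)]; last by rewrite hdiv eqxx.
have -> : k' = k by apply: val_inj; rewrite /= hk' hdiv.
by rewrite hmod (tnth_nth false).
Qed.

End Triv.

Lemma triv_achievable (R : realType) (M : R) n s : 0 <= M -> (0 < s)%N -> (s <= n.+1)%N ->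
  achievable_rate M n.+1 s s%:R.
Proof.
move=> hM hs hsn eps heps; exists 1%N => F hF; exists 0%N; split.
  by rewrite mulr_ge0.
exists (triv n.+1 s F); split.
  move=> d _; rewrite /error_prob.
  have -> : #|[set W | decoding_error (triv n.+1 s F) d W]| = 0%N.
    apply: eq_card0 => W; rewrite !inE /decoding_error; apply/negbTE.
    by rewrite negb_exists; apply/forallP => k; rewrite triv_ok eqxx.
  by rewrite mul0r ltW.
rewrite /expected_rate /=.
have hF' : (F%:R : R) != 0 by rewrite pnatr_eq0 -lt0n.
have hD : (0 < #|distinct_demands n.+1 s|)%N.
  apply/card_gt0P; exists (blk n s 1 ord0); rewrite inE; apply/injectiveP => k k'.
  by move/(blk_dis (n:=n) (s:=s) (b:=1)); rewrite mul1n => /(_ hsn) [].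
under eq_bigr do rewrite natrM mulfK //.
rewrite sumr_const -[_ *+ _]mulr_natr mulfK ?mul1r //.
by rewrite pnatr_eq0 -lt0n.
Qed.

Lemma achievable_lb (R : realType) (M : R) n s b r : 0 <= M -> (0 < s)%N -> (0 < b)%N ->
  (b * s <= n.+1)%N -> achievable_rate M n.+1 s r -> s%:R * (1 - M / b%:R) <= r.
Proof.
move=> hM hs hb hbs hr.
rewrite leNgt; apply/negP => hlt.
set L := s%:R * (1 - M / b%:R) in hlt.
have hdl : 0 < L - r by rewrite subr_gt0.
have hbR : (0 : R) < b%:R by rewrite ltr0n.
have heps : (0 : R) < 1 / (2 * b)%:R by rewrite divr_gt0 // ltr0n; lia.
have [F0 hF0] := hr _ heps.
set F := maxn F0 (Num.truncn ((L - r)^-1)).+1.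
have hF : (0 < F)%N by rewrite /F; lia.
have hfR : (0 : R) < F%:R by rewrite ltr0n.
have hFd : (L - r)^-1 < F%:R.
  apply: lt_le_trans (truncnS_gt _) _; rewrite ler_nat; exact: leq_maxr.
have [C [hC [sch [herr hrate]]]] := hF0 F (leq_maxl _ _).
have key := @scheme_bound R n s F C sch b hb hbs herr.
set D := distinct_demands n.+1 s in key.
have hD : (0 < #|D|)%N.
  apply/card_gt0P; exists (blk n s b (Ordinal hb)); rewrite inE; apply/injectiveP => k k'.
  by move/(blk_dis hbs) => [].
have hdR : (0 : R) < #|D|%:R by rewrite ltr0n.
move: key; rewrite -(ler_nat R) !natrM !natrD natrM => key.
set x := ((\sum_(d in D) len sch d)%N)%:R : R in key.
have hrate' : L - F%:R^-1 <= expected_rate R sch.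
  rewrite /expected_rate -mulr_suml -natr_sum -/x -/D.
  rewrite ler_pdivlMr // ler_pdivlMr //.
  set m := M / b%:R.
  have hm : M = m * b%:R by rewrite /m divfK // gt_eqF.
  have hc : (C%:R : R) <= m * b%:R * F%:R by rewrite -hm.
  have e1 : L - F%:R^-1 = s%:R * (1 - m) - F%:R^-1 by [].
  have e2 : (s%:R * (1 - m) - F%:R^-1) * #|D|%:R * F%:R
      = s%:R * #|D|%:R * F%:R - s%:R * m * #|D|%:R * F%:R - #|D|%:R.
    by field; rewrite gt_eqF.
  rewrite e1 e2.
  rewrite -(ler_pM2l hbR).
  have h1 : #|D|%:R * s%:R * C%:R <= #|D|%:R * s%:R * (m * b%:R * F%:R) :> R.
    by rewrite ler_wpM2l // mulr_ge0 // ler0n.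
  have h2 : (#|D|%:R : R) <= b%:R * #|D|%:R.
    by rewrite ler_peMl ?ler1n // ltW.
  move: key; rewrite !(natrD, natrM) => key.
  lra.
have : F%:R^-1 < L - r.
  rewrite -[X in X < _]mul1r ltr_pdivrMr //.
  have := hFd; rewrite -(ltr_pM2l hdl) mulfV ?gt_eqF //.
lra.
Qed.

Lemma bigmax_ge0 (R : realType) (r : seq nat) (f : nat -> R) :
  0 <= \big[Num.max/0]_(j <- r) f j.
Proof.
elim: r => [|a r IH]; first by rewrite big_nil.
by rewrite big_cons le_max IH orbT.
Qed.

Lemma bigmax_ge (R : realType) (r : seq nat) (f : nat -> R) i :
  i \in r -> f i <= \big[Num.max/0]_(j <- r) f j.
Proof.
elim: r => [//|a r IH]; rewrite inE big_cons le_max => /orP [/eqP ->|h].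
  by rewrite lexx.
by rewrite IH // orbT.
Qed.

Lemma Rbar_lb (R : realType) (M : R) n s b : 0 <= M -> (0 < s)%N -> (0 < b)%N ->
  (b * s <= n.+1)%N -> s%:R * (1 - M / b%:R) <= Rbar M n.+1 s.
Proof.
move=> hM hs hb hbs; apply: lb_le_inf.
  exists s%:R; apply: triv_achievable => //.
  by apply: leq_trans hbs; rewrite leq_pmull.
move=> r hr; exact: (@achievable_lb R M n s b r hM hs hb hbs hr).
Qed.

Lemma bernoulli (R : realType) (q : R) K : 0 <= q <= 1 -> 1 - K%:R * q <= (1 - q) ^+ K.
Proof.
move=> /andP [h0 h1]; elim: K => [|K IH]; first by rewrite mul0r subr0 expr0.
rewrite exprSr -natr1.
have h2 : 0 <= 1 - q by lra.
have := ler_wpM2r h2 IH.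
have h3 : 0 <= K%:R * q * q by rewrite !mulr_ge0 // ler0n.
nra.
Qed.

Lemma Rfun_bounds (R : realType) (M : R) N K : 0 <= M -> (0 < N)%N ->
  [/\ Rfun M N K <= (ssrnat.minn N K)%:R,
      0 < M -> M <= N%:R -> Rfun M N K <= (1 - M / N%:R) * (N%:R / M),
      0 < M -> Rfun M N K <= N%:R / M &
      N%:R <= M -> Rfun M N K <= 0].
Proof.
move=> hM hN.
have hNR : (0 : R) < N%:R by rewrite ltr0n.
rewrite /Rfun; case: eqP => [->|hM0].
  split; [by [] | by rewrite ltxx | by rewrite ltxx |].
  by move=> h; have := lt_le_trans hNR h; rewrite ltxx.
have hMp : 0 < M by rewrite lt_neqAle eq_sym; apply/andP; split => //; apply/eqP.
have ht0 : (0 : R) <= (ssrnat.minn N K)%:R by rewrite ler0n.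
have hNM0 : 0 <= N%:R / M by rewrite divr_ge0 // ltW.
case: (boolP (M <= N%:R)) => hMN; rewrite hMp /=; last first.
  split => //.
set q := M / N%:R.
have hq0 : 0 <= q by rewrite divr_ge0 // ltW.
have hq1 : q <= 1 by rewrite ler_pdivrMr // mul1r.
have hqK := @bernoulli R q K (ltac:(rewrite hq0 hq1) : 0 <= q <= 1).
have hpow0 : 0 <= (1 - q) ^+ K by rewrite exprn_ge0 // subr_ge0.
have hpow1 : (1 - q) ^+ K <= 1 by rewrite exprn_ile1 // ?subr_ge0 // lerBlDr lerDl.
set X := N%:R / M * (1 - (1 - q) ^+ K).
have hX0 : 0 <= X by rewrite mulr_ge0 // subr_ge0.
have hXN : X <= N%:R / M by rewrite -[leRHS]mulr1 ler_wpM2l // lerBlDr lerDl.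
have hNMq : N%:R / M * q = 1 by rewrite /q mulrA divfK ?gt_eqF // divff // gt_eqF.
have hXK : X <= K%:R.
  have : X <= N%:R / M * (K%:R * q) by rewrite ler_wpM2l //; lra.
  by rewrite mulrCA hNMq mulr1.
set mn := Num.min X N%:R.
have hmn0 : 0 <= mn by rewrite le_min hX0 ltW.
have hmnX : mn <= X by rewrite ge_min lexx.
have hmnN : mn <= N%:R by rewrite ge_min lexx orbT.
have h1q : 0 <= 1 - q by rewrite subr_ge0.
have h1q1 : 1 - q <= 1 by lra.
have hA : (1 - q) * mn <= mn by rewrite -[leRHS]mul1r ler_wpM2r.
have hB : (1 - q) * mn <= (1 - q) * (N%:R / M).
  by rewrite ler_wpM2l //; apply: le_trans hmnX hXN.
split.
- apply: le_trans hA _.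
  case: (leqP N K) => h; first exact: hmnN.
  exact: le_trans hmnX hXK.
- by move=> _ _.
- move=> _; apply: le_trans hB _; rewrite -[leRHS]mul1r ler_wpM2r //.
- move=> hNM.
  have hMN' : M = N%:R by apply/eqP; rewrite eq_le hMN hNM.
  have -> : q = 1 by rewrite /q hMN' divff // gt_eqF.
  by rewrite subrr mul0r.
Qed.

Theorem lemma3 (R : realType) (M : R) (N K : nat) :
  0 <= M -> (0 < N)%N -> (0 < K)%N ->
  \big[Num.max/0]_(1 <= s < ((minn N K + 3) %/ 4).+1) Rbar M N s
    >= Rfun M N K / 48.
Proof.
move=> hM hN hK.
have [hRt hRii hRiii hRiv] := @Rfun_bounds R M N K hM hN.
have htN : (ssrnat.minn N K <= N)%N by apply: geq_minl.
have ht1 : (1 <= ssrnat.minn N K)%N by rewrite leq_min hN hK.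
move: hRt htN ht1.
set t := ssrnat.minn N K => hRt htN ht1.
set S := ((t + 3) %/ 4)%N.
have hS1 : (1 <= S)%N by rewrite /S; lia.
have hSt : (S <= t)%N by rewrite /S; lia.
have h4S : (t <= 4 * S)%N by rewrite /S; lia.
set Mx := \big[Num.max/0]_(1 <= s < S.+1) Rbar M N s.
have hMx0 : 0 <= Mx by apply: bigmax_ge0.
have hMx : forall s, (1 <= s)%N -> (s <= S)%N -> Rbar M N s <= Mx.
  by move=> s h1 h2; apply: bigmax_ge; rewrite mem_index_iota h1 ltnS h2.
have [n hn] : exists n, N = n.+1 by exists N.-1; lia.
subst N.
have hNR : (0 : R) < n.+1%:R by rewrite ltr0n.
have htR : (t%:R : R) <= 4 * S%:R by rewrite -natrM ler_nat.
case: (lerP M (1 / 2)) => hM12.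
  have hb := @Rbar_lb R M n S 1 hM hS1 (ltnSn 0) (ltac:(rewrite mul1n; exact: leq_trans hSt htN)).
  have := hMx S hS1 (leqnn S).
  rewrite divr1 in hb.
  have hS0 : (0 : R) <= S%:R by rewrite ler0n.
  have hSM : S%:R * M <= S%:R * (1 / 2) by rewrite ler_wpM2l.
  lra.
case: (lerP (n.+1%:R) (4 * M)) => h4M.
  case: (lerP (n.+1%:R) M) => hNM.
    have := hRiv hNM; lra.
  have hMp : 0 < M by lra.
  have hb := @Rbar_lb R M n 1 n.+1 hM (ltnSn 0) (ltn0Sn n) (ltac:(by rewrite muln1)).
  have := hMx 1%N (leqnn 1) hS1.
  have hR := hRii hMp (ltW hNM).
  have hq : 0 <= 1 - M / n.+1%:R by rewrite subr_ge0 ler_pdivrMr // mul1r ltW.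
  have hNM4 : n.+1%:R / M <= 4 by rewrite ler_pdivrMr.
  have := ler_wpM2l hq hNM4.
  rewrite mul1r in hb.
  move: hR hq hb hNM4; set q := M / n.+1%:R; set A := n.+1%:R / M => hR hq hb hNM4 h1 h2.
  lra.
have hMp : 0 < M by lra.
set y := n.+1%:R / (4 * M).
have hy1 : 1 <= y by rewrite ler_pdivlMr ?mul1r // ?ltW // mulr_gt0.
set m := Num.truncn y.
have hm1 : (1 <= m)%N by rewrite /m truncn_gt0.
have hmy : (m%:R : R) <= y by rewrite /m truncn_le; lra.
have hmy2 : y < (m.+1)%:R by apply: truncnS_gt.
set s0 := ssrnat.minn S m.
have hs01 : (1 <= s0)%N by rewrite leq_min hS1 hm1.
have hs0S : (s0 <= S)%N by apply: geq_minl.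
have hs0m : (s0 <= m)%N by apply: geq_minr.
have hR8 : Rfun M n.+1 K <= 8 * s0%:R.
  have hRy : Rfun M n.+1 K <= 4 * y.
    have := hRiii hMp; rewrite /y.
    have -> : 4 * (n.+1%:R / (4 * M)) = n.+1%:R / M by field; rewrite gt_eqF.
    by [].
  have hS0 : (0 : R) <= S%:R by rewrite ler0n.
  rewrite /s0; case: leqP => h.
    lra.
  have : (m.+1 <= 2 * m)%N by rewrite mul2n -addnn -addn1 leq_add2l.
  rewrite -(ler_nat R) natrM => hm2.
  lra.
set b := (n.+1 %/ s0)%N.
have hbs : (b * s0 <= n.+1)%N by apply: leq_divM.
have hblt : (n.+1 < b.+1 * s0)%N by apply: ltn_ceil.
have hs0N : (s0 <= n.+1)%N by apply: leq_trans hs0S (leq_trans hSt htN).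
have hb1 : (0 < b)%N by rewrite /b divn_gt0.
have hbR : (0 : R) < b%:R by rewrite ltr0n.
have hs0R : (0 : R) < s0%:R by rewrite ltr0n.
have h4Ms : s0%:R * (4 * M) <= n.+1%:R.
  have : (s0%:R : R) <= y by apply: le_trans hmy; rewrite ler_nat.
  by rewrite /y ler_pdivlMr // mulr_gt0.
have hblt' : (n.+1%:R : R) < (b%:R + 1) * s0%:R.
  by rewrite natr1 -natrM ltr_nat.
have h4Mb : 4 * M < b%:R + 1.
  have : s0%:R * (4 * M) < s0%:R * (b%:R + 1) by rewrite mulrC [X in _ < X]mulrC; lra.
  by rewrite ltr_pM2l.
have hMb : M / b%:R <= 1 / 2.
  by rewrite ler_pdivrMr //; lra.
have hb := @Rbar_lb R M n s0 b hM hs01 hb1 hbs.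
have := hMx s0 hs01 hs0S.
have : s0%:R * (M / b%:R) <= s0%:R * (1 / 2) by rewrite ler_wpM2l // ltW.
lra.
Qed.
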